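(* Let $a\in(0,0.01)$ be a constant and $k$ such that $ak$ is an even integer. Let $G$ be a graph and $K,K'$ vertex sets of size $k$ with $|K\cap K'|\ge(1-10a)k$ such that $F=G[K]\in\mathcal{F}_k$ with partitions $K=A\cup B$, $A=A_1\cup\dots\cup A_r$, and $F'=G[K']\in\mathcal{F}_k$ with partitions $K'=A'\cup B'$, $A'=A'_1\cup\dots\cup A'_r$ (as in the definition of $\mathcal{F}_k$). Then: 1. a vertex $v\in K\cap K'$ lies in $A$ if and only if it lies in $A'$; 2. for $u,v\in A\cap A'$, $\{u,v\}=A_j$ for some $j$ if and only if $\{u,v\}=A'_{j'}$ for some $j'$.
   Context: A graph $F$ on a $k$-set $K$ is in $\mathcal{F}_k$ with respect to partitions $K=A\cup B$, $A=A_1\cup\dots\cup A_r$, where $|A|=ak$, $|B|=(1-a)k$, $r=ak/2$, $|A_i|=2$, if: (1) $F$ is bipartite with parts $A$ and $B$; (2) for every $i$ and every $\beta\in B$, $\beta$ is adjacent either to both vertices of $A_i$ or to neither; (3) every vertex of $A$ has degree at least $0.15k$ in $F$; (4) for all $i\ne j$, the symmetric difference of the neighborhoods of $A_i$ and $A_j$ has size at least $0.25k$. *)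

(* Defs.v *)
From mathcomp Require Import all_boot all_order all_algebra.
Set Implicit Arguments. Unset Strict Implicit. Unset Printing Implicit Defensive.
Import Order.TTheory GRing.Theory Num.Theory.
Local Open Scope ring_scope.

(* A graph is a relation [G : rel V] on a finite vertex type V (assumed
   symmetric and irreflexive in the theorem).  F = G[K] is the induced
   subgraph on K. *)

Definition nbhdK (V : finType) (G : rel V) (K S : {set V}) : {set V} :=
  [set y in K | [exists x in S, G x y]].

Definition symdiff (V : finType) (X Y : {set V}) : {set V} :=
  (X :\: Y) :|: (Y :\: X).

Definition in_Fk (R : realFieldType) (a : R) (k : nat) (V : finType)
    (G : rel V) (K A B : {set V}) (r : nat) (Ai : 'I_r -> {set V}) : Prop :=
  ((
      K = A :|: B /\ [disjoint A & B]) /\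
      [/\ #|K| = k, (#|A|%:R = a * k%:R), (#|B|%:R = (1 - a) * k%:R)
        & r%:R = a * k%:R / 2] /\
      [/\ A = \bigcup_(i < r) Ai i,
          (forall i j : 'I_r, i != j -> [disjoint Ai i & Ai j])
        & (forall i : 'I_r, #|Ai i| = 2)] /\
    [/\
      (forall x y, x \in K -> y \in K -> G x y ->
          (x \in A) && (y \in B) || (x \in B) && (y \in A)),
      (forall (i : 'I_r) b x y, b \in B -> x \in Ai i -> y \in Ai i ->
          G b x = G b y),
      (forall x, x \in A -> (15%:R / 100%:R : R) * k%:R <= #|nbhdK G K [set x]|%:R)
    &
      (forall i j : 'I_r, i != j ->
          (25%:R / 100%:R : R) * k%:R <=
            #|symdiff (nbhdK G K (Ai i)) (nbhdK G K (Ai j))|%:R)]).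

(* Main.v *)
Require Import Defs.
From mathcomp Require Import all_boot all_order all_algebra.
From mathcomp Require Import zify ring lra.
Import Order.TTheory GRing.Theory Num.Theory.
Set Implicit Arguments. Unset Strict Implicit.
Local Open Scope ring_scope.

Lemma inN1 (V : finType) (G : rel V) (K : {set V}) x y :
  (y \in nbhdK G K [set x]) = (y \in K) && G x y.
Proof.
rewrite /nbhdK inE; congr (_ && _); apply/existsP/idP.
  by case=> x' /andP[/set1P -> ].
by move=> h; exists x; rewrite set11.
Qed.

Lemma N_pair (R : realFieldType) (a : R) (k : nat) (V : finType) (G : rel V)
  (K A B : {set V}) (r : nat) (Ai : 'I_r -> {set V}) i x :
  symmetric G -> in_Fk a k G K A B Ai -> x \in Ai i ->
  nbhdK G K (Ai i) = nbhdK G K [set x].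
Proof.
move=> Gs [[HKAB Hdis] [_ [[HAU _ _] [H1 H2 _ _]]]] xi.
apply/setP=> y; rewrite inN1 /nbhdK inE; apply/idP/idP.
  case/andP=> yK /existsP [x' /andP [x'i Gx'y]].
  have x'A : x' \in A by rewrite HAU; apply/bigcupP; exists i.
  have x'K : x' \in K by rewrite HKAB inE x'A.
  have := H1 _ _ x'K yK Gx'y.
  have x'nB : x' \notin B by move: Hdis => /disjointFr ->.
  case/orP => /andP [h1 yB]; last by rewrite h1 in x'nB.
  by rewrite yK /= Gs -(H2 i y x' x yB x'i xi) Gs.
case/andP=> yK Gxy; rewrite yK /=; apply/existsP; exists x; by rewrite xi.
Qed.

Lemma part1 (R : realFieldType) (a : R) (k r : nat)
    (V : finType) (G : rel V)
    (K A B K' A' B' : {set V}) (Ai Ai' : 'I_r -> {set V}) v :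
  0 < a -> a < 1%:R / 100%:R ->
  #|K| = k ->
  (1 - 10%:R * a) * k%:R <= #|K :&: K'|%:R ->
  in_Fk a k G K A B Ai ->
  in_Fk a k G K' A' B' Ai' ->
  v \in K :&: K' -> v \in A -> v \in A'.
Proof.
move=> a0 a1 HK Hc [[HKAB Hdis] [[_ HA _ _] [_ [H1 H2 H3 H4]]]]
  [[HKAB' Hdis'] [[HK' HA' _ _] [_ [H1' H2' H3' H4']]]] /setIP [vK vK'] vA.
apply/negPn/negP => vnA'.
set N := nbhdK G K [set v].
have sub1 : N :&: K' \subset A'.
  apply/subsetP => y /setIP []; rewrite inN1 => /andP [yK Gvy] yK'.
  by have := H1' _ _ vK' yK' Gvy; rewrite (negbTE vnA') /= => /andP [].
have sub2 : N :\: K' \subset K :\: K'.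
  by apply: setSD; apply/subsetP => y; rewrite inN1 => /andP [].
have e1 := cardsID K' N.
have e2 := cardsID K' K.
have l1 := subset_leq_card sub1.
have l2 := subset_leq_card sub2.
have hn : (#|N| + #|K :&: K'| <= #|A'| + #|K|)%N.
  lia.
have kpos : (0 < k)%N by rewrite -HK; apply/card_gt0P; exists v.
have kR : (0 : R) < k%:R by rewrite ltr0n.
have hnR : (#|N| + #|K :&: K'|)%:R <= (#|A'| + #|K|)%:R :> R by rewrite ler_nat.
rewrite !natrD HA' HK in hnR.
have := H3 v vA; rewrite -/N => hd.
have ak : a * k%:R < 1%:R / 100%:R * k%:R by rewrite ltr_pM2r.
lra.
Qed.

Lemma part2 (R : realFieldType) (a : R) (k r : nat)
    (V : finType) (G : rel V)
    (K A B K' A' B' : {set V}) (Ai Ai' : 'I_r -> {set V}) u v :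
  0 < a -> a < 1%:R / 100%:R -> symmetric G ->
  #|K'| = k ->
  (1 - 10%:R * a) * k%:R <= #|K :&: K'|%:R ->
  in_Fk a k G K A B Ai ->
  in_Fk a k G K' A' B' Ai' ->
  u \in A :&: A' -> v \in A :&: A' ->
  (exists j : 'I_r, [set u; v] = Ai j) ->
  (exists j' : 'I_r, [set u; v] = Ai' j').
Proof.
move=> a0 a1 Gs HK' Hc HF HF' /setIP [uA uA'] /setIP [vA vA'] [j Hj].
have HF0 := HF; have HF'0 := HF'.
move: HF HF' => [[HKAB Hdis] [[HK HA _ _] [[HAU _ Hcard] _]]]
  [[HKAB' Hdis'] [[_ HA' _ _] [[HAU' Hdisj' Hcard'] [_ _ _ H4']]]].
have uv : u != v.
  apply/eqP => e; have := Hcard j; by rewrite -Hj e setUid cards1.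
move: uA' vA'; rewrite HAU' => /bigcupP [j1 _ uj1] /bigcupP [j2 _ vj2].
have [e|ne] := eqVneq j1 j2.
  exists j1; apply/eqP; rewrite eqEcard Hcard' cards2 uv andbT.
  by apply/subsetP => y /set2P [->|->]; rewrite // e.
exfalso.
have NF : nbhdK G K [set u] = nbhdK G K [set v].
  rewrite -(N_pair Gs HF0 (_ : u \in Ai j)) ?(N_pair Gs HF0 (_ : v \in Ai j)) //.
    by rewrite -Hj set22.
  by rewrite -Hj set21.
have h4 := H4' _ _ ne.
rewrite (N_pair Gs HF'0 uj1) (N_pair Gs HF'0 vj2) in h4.
have sub : symdiff (nbhdK G K' [set u]) (nbhdK G K' [set v]) \subset K' :\: K.
  apply/subsetP => y; rewrite /symdiff !in_setU !in_setD !inN1.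
  have HN : y \in K -> G u y = G v y.
    move=> yK; move/setP: NF => /(_ y); rewrite !inN1 yK //.
  case: (boolP (y \in K)) => yK; last by rewrite /=; case: (y \in K').
  by rewrite HN //; case: (G v y); case: (y \in K').
have l := subset_leq_card sub.
have e2 := cardsID K K'; rewrite (setIC K') in e2.
have kpos : (0 < k)%N.
  by rewrite -HK; apply/card_gt0P; exists u; rewrite HKAB inE uA.
have kR : (0 : R) < k%:R by rewrite ltr0n.
have hs : (#|symdiff (nbhdK G K' [set u]) (nbhdK G K' [set v])| + #|K :&: K'| <= k)%N.
  rewrite -HK'; lia.
have hsR := hs; rewrite -(ler_nat R) natrD in hsR.
have ak : a * k%:R < 1%:R / 100%:R * k%:R by rewrite ltr_pM2r.
move: h4 hsR Hc ak kR a0 a1.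
set s := (#|_|%:R).
set c := (#|_|%:R).
clear; move=> *; lra.
Qed.

Theorem mainTheorem14 (R : realFieldType) (a : R) (k r : nat)
    (V : finType) (G : rel V)
    (K A B K' A' B' : {set V}) (Ai Ai' : 'I_r -> {set V}) :
  0 < a -> a < 1%:R / 100%:R ->
  a * k%:R = (2 * r)%:R ->
  symmetric G -> irreflexive G ->
  #|K| = k -> #|K'| = k ->
  (1 - 10%:R * a) * k%:R <= #|K :&: K'|%:R ->
  in_Fk a k G K A B Ai ->
  in_Fk a k G K' A' B' Ai' ->
  (forall v, v \in K :&: K' -> (v \in A <-> v \in A')) /\
  (forall u v, u \in A :&: A' -> v \in A :&: A' ->
     ((exists j : 'I_r, [set u; v] = Ai j) <->
      (exists j' : 'I_r, [set u; v] = Ai' j'))).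
Proof.
move=> a0 a1 _ Gs _ HK HK' Hc HF HF'.
have Hc' : (1 - 10%:R * a) * k%:R <= #|K' :&: K|%:R by rewrite setIC.
split.
  move=> v vKK; split.
    exact: (part1 a0 a1 HK Hc HF HF' vKK).
  by apply: (part1 a0 a1 HK' Hc' HF' HF); rewrite setIC.
move=> u v uA vA; split.
  exact: (part2 a0 a1 Gs HK' Hc HF HF' uA vA).
by apply: (part2 a0 a1 Gs HK Hc' HF' HF); rewrite setIC.
Qed.
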